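(* Let $(X_\alpha,\tau_\alpha)_{\alpha\in\Omega}$ be a family of topological spaces and let $X=\sum_{\alpha\in\Omega}X_\alpha$ be their topological sum (disjoint union). Then $X$ is a kd-space if and only if each $X_\alpha$ is a kd-space.
   Context: A space is a kd-space if every compact subset is $\delta$-closed. In a space $Y$, a set $U$ is regular open if $U=\mathrm{Int}(\mathrm{Cl}(U))$; a point $x$ is a $\delta$-cluster point of $B\subseteq Y$ if $B\cap U\neq\emptyset$ for every regular open $U\ni x$; $B$ is $\delta$-closed if it contains all its $\delta$-cluster points. *)

(* Defs.v *)
From HB Require Import structures.
From mathcomp Require Import all_boot all_order all_algebra.
From mathcomp Require Import all_classical all_reals all_analysis.
Set Implicit Arguments. Unset Strict Implicit. Unset Printing Implicit Defensive.
Local Open Scope classical_set_scope.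

Definition delta_cluster (Y : topologicalType) (B : set Y) (x : Y) : Prop :=
  forall U : set Y, regopen U -> U x -> B `&` U !=set0.

Definition delta_closed (Y : topologicalType) (B : set Y) : Prop :=
  forall x : Y, delta_cluster B x -> B x.

Definition kd_space (Y : topologicalType) : Prop :=
  forall K : set Y, compact K -> delta_closed K.

(* Main.v *)
Require Import Defs.
From HB Require Import structures.
From mathcomp Require Import all_boot all_order all_algebra.
From mathcomp Require Import all_classical all_reals all_analysis.
From Stdlib Require Import Eqdep_dec.
Local Open Scope classical_set_scope.
Section S.
Context {I : choiceType} {X : I -> topologicalType}.
Lemma nbhsT (i : I) (x : X i) (S : set {i & X i}) :
  nbhs (existT _ i x) S <-> nbhs x (existT _ i @^-1` S).
Proof. by []. Qed.
Lemma existT_inj (i : I) (a b : X i) : existT X i a = existT X i b -> a = b.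
Proof. exact: (Eqdep_dec.inj_pair2_eq_dec _ (@eq_comparable I)). Qed.

Lemma idx_nbhs (q : {i & X i}) : nbhs q (existT X (projT1 q) @` setT).
Proof. case: q => j y; apply/nbhsT; apply: filterS filterT => z _; by exists z. Qed.

Lemma idx_eq (i j : I) (a : X i) (b : X j) : existT X i a = existT X j b -> i = j.
Proof. by move/(f_equal (@projT1 _ _)). Qed.

Lemma closure_e (i : I) (V : set (X i)) (q : {i & X i}) :
  closure (existT X i @` V) q -> exists y, q = existT X i y /\ closure V y.
Proof.
case: q => j y cq.
have [p [[v Vv <-] [w _ /idx_eq ij]]] := cq _ (idx_nbhs (existT X j y)).
move: ij => /= ij; subst j; exists y; split => // B NB.
have [p' [[a Va <-] [b Bb /existT_inj ab]]] := cq _ (existT_nbhs _ _ _ NB).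
by exists a; split => //; rewrite -ab.
Qed.

Lemma closure_pre (i : I) (U : set {i & X i}) :
  closure (existT X i @^-1` U) `<=` existT X i @^-1` closure U.
Proof.
move=> w cw B NB; have [z [Uz Bz]] := cw _ (NB : nbhs w (existT X i @^-1` B)).
by exists (existT X i z).
Qed.

Lemma compact_pre (i : I) (K : set {i & X i}) : compact K -> compact (existT X i @^-1` K).
Proof.
move=> cK F PF FK.
have [q [Kq cq]] := cK (existT X i @ F) _ FK.
case: q Kq cq => j y Kq cq.
have FT : F (existT X i @^-1` (existT X i @` setT)).
  by apply: filterS filterT => z _ /=; exists z.
have [p [[v _ <-] [w _ /idx_eq ij]]] := cq _ _ FT (idx_nbhs (existT X j y)).
move: ij => /= ij; subst j; exists y; split => // A B FA NB.
have [p' [[a Aa <-] [b Bb /existT_inj ab]]] := cq _ _ (filterS (@preimage_image _ _ _ A) FA) (existT_nbhs _ _ _ NB).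
by exists a; split => //; rewrite -ab.
Qed.
End S.
Lemma dcP (Y : topologicalType) (B : set Y) (x : Y) :
  delta_cluster B x <-> forall V, open V -> V x -> B `&` (closure V)° !=set0.
Proof.
split.
- move=> dc V oV Vx; apply: dc.
  + exact: (interior_closure_idem V).
  + have : V° x by move: Vx; rewrite -{1}(interior_id V).1.
    by apply: interiorS; exact: subset_closure.
- move=> H U rU Ux; rewrite -rU; apply: H Ux; rewrite -rU; exact: open_interior.
Qed.

Theorem mainTheorem6 (I : choiceType) (X : I -> topologicalType) :
  kd_space {i & X i} <-> (forall i : I, kd_space (X i)).
Proof.
split.
- move=> hK i K cK x dcx.
  have cK' : compact (existT X i @` K).
    apply: continuous_compact => //; apply: continuous_subspaceT.
    exact: existT_continuous.
  suff dc : delta_cluster (existT X i @` K) (existT X i x).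
    by have [y Ky /existT_inj <-] := hK _ cK' _ dc.
  move=> U rU Ux.
  have oU : open U by rewrite -rU; exact: open_interior.
  have oV : open (existT X i @^-1` U) by move/sigT_openP : oU; apply.
  have [z [Kz Cz]] := (@dcP _ K x).1 dcx _ oV Ux.
  exists (existT X i z); split; first by exists z.
  rewrite -rU /interior; apply/nbhsT; apply: filterS Cz.
  exact: closure_pre.
- move=> hX K cK [i x] dcq.
  apply: (hX i _ (compact_pre i K cK) x).
  apply/dcP => V oV Vx.
  have rU : regopen (closure (existT X i @` V))° := interior_closure_idem _.
  have Ux : (closure (existT X i @` V))° (existT X i x).
    apply: filterS (@subset_closure _ _) _; apply: existT_nbhs.
    exact: open_nbhs_nbhs.
  have [q [Kq Uq]] := dcq _ rU Ux.
  have [y [qy _]] := closure_e _ _ _ (nbhs_singleton Uq).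
  subst q; exists y; split => //.
  have Uq' : nbhs y (existT X i @^-1` closure (existT X i @` V)) := Uq.
  rewrite /interior; apply: filterS Uq' => z /closure_e [y' [/existT_inj -> //]].
Qed.
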